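(* Fix $m\ge1$. For every constant $c>0$, \[\limsup_{n\to\infty}\left\|OST_{m,n}^{\,n\log n+cn}-U_{m,n}\right\|_{Sep}\le e^{-c}.\]
   Context: Let $\xi$ be a primitive $m$-th root of unity and $[n]=\{1,\dots,n\}$. The generalized symmetric group $G_{m,n}$ (order $m^nn!$) is the set of tuples $(\xi^{k_1},\dots,\xi^{k_n},\sigma)$ with $k_i\in\mathbb{Z}_m$, $\sigma\in S_n$, with multiplication $(\xi^{k_1},\dots,\xi^{k_n},\sigma)(\xi^{k_1'},\dots,\xi^{k_n'},\sigma')=(\xi^{k_1}\xi^{k'_{\sigma(1)}},\dots,\xi^{k_n}\xi^{k'_{\sigma(n)}},\sigma\sigma')$. For $1\le i\le j\le n$, $k\in\mathbb{Z}_m$, let $g_{i,j,k}$ have permutation part the transposition $(ij)$ (identity if $i=j$) and tuple with $\xi^k$ in positions $i$ and $j$ and $1$ elsewhere. $OST_{m,n}$ is the law of $g_{i,j,k}$ with $j$ uniform on $[n]$, then $i$ uniform on $[j]$, $k$ uniform on $\mathbb{Z}_m$ independently (probability $\frac{1}{njm}$ per triple). $OST^t_{m,n}$ is its $t$-fold convolution power (exponents understood as integers). $U_{m,n}$ is the uniform distribution on $G_{m,n}$, and the separation distance is $\|P-U\|_{Sep}=1-\min_{g\in G_{m,n}}P(g)/U(g)$. *)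

(* Defs.v *)
From HB Require Import structures.
From mathcomp Require Import all_boot all_order all_algebra all_fingroup.
From mathcomp Require Import all_classical all_reals all_analysis.
Set Implicit Arguments. Unset Strict Implicit. Unset Printing Implicit Defensive.
Import Order.TTheory GRing.Theory Num.Theory.
Local Open Scope ring_scope.

(* Generalized symmetric group G_{m,n}, m >= 1.  An element
   (xi^{k_1},...,xi^{k_n}, sigma) is encoded by its exponent vector
   k : 'I_n -> Z_m (Z_m represented by 'I_(m.-1.+1), which is 'I_m for
   m >= 1, with its canonical additive group structure) and sigma : 'S_n.
   Positions [n] = {1..n} are encoded 0-based as 'I_n. *)
Definition Gmn (m n : nat) : finType :=
  ({ffun 'I_n -> 'I_m.-1.+1} * 'S_n)%type.

(* Product: (k, s)(k', s') = (i |-> k_i + k'_{s(i)}, s s').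
   MathComp's permutation product satisfies (s * s') i = s' (s i), which is
   exactly the composition convention making this law associative. *)
Definition Gmul (m n : nat) (a b : Gmn m n) : Gmn m n :=
  ([ffun i => (a.1 i + b.1 (a.2 i))%R], (a.2 * b.2)%g).

Definition Gone (m n : nat) : Gmn m n := ([ffun => 0%R], 1%g).

Definition gen (m n : nat) (i j : 'I_n) (k : 'I_m.-1.+1) : Gmn m n :=
  ([ffun l => if (l == i) || (l == j) then k else 0%R], tperm i j).

Section Dist.
Variable R : realType.

(* OST_{m,n}: j uniform on [n], i uniform on [j] (i <= j), k uniform on Z_m;
   mass 1/(n j m) per triple (1-based j = val j + 1). *)
Definition OST (m n : nat) (g : Gmn m n) : R :=
  \sum_(j : 'I_n) \sum_(i : 'I_n | (i <= j)%N) \sum_(k : 'I_m.-1.+1)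
     (if gen i j k == g then (n%:R * (j.+1)%:R * m%:R)^-1 else 0).

Definition conv (m n : nat) (P Q : Gmn m n -> R) (g : Gmn m n) : R :=
  \sum_(a : Gmn m n) \sum_(b : Gmn m n)
     (if Gmul a b == g then P a * Q b else 0).

Definition delta1 (m n : nat) (g : Gmn m n) : R :=
  if g == Gone m n then 1 else 0.

Definition convpow (m n : nat) (P : Gmn m n -> R) (t : nat) : Gmn m n -> R :=
  iter t (fun X => conv X P) (@delta1 m n).

Definition Unif (m n : nat) (g : Gmn m n) : R := (#|Gmn m n|%:R)^-1.

Definition sep (m n : nat) (P : Gmn m n -> R) : R :=
  1 - \big[Num.min/(P (Gone m n) / Unif (Gone m n))]_(g : Gmn m n)
        (P g / Unif g).

End Dist.

(* Main.v *)
Require Import Defs.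
From HB Require Import structures.
From mathcomp Require Import all_boot all_order all_algebra all_fingroup.
From mathcomp Require Import all_classical all_reals all_analysis.
Import Order.TTheory GRing.Theory Num.Theory.
Local Open Scope ring_scope.
Set Implicit Arguments. Unset Strict Implicit. Unset Printing Implicit Defensive.
Section Grp.
Variables (m n : nat).
Local Notation T := (Gmn m n).

Definition Ginv (a : T) : T := ([ffun i => - a.1 ((a.2)^-1%g i)], (a.2)^-1%g).

Lemma GmulA (a b c : T) : Gmul (Gmul a b) c = Gmul a (Gmul b c).
Proof.
rewrite /Gmul /=; congr pair; last by rewrite mulgA.
by apply/ffunP=> i; rewrite !ffunE /= permM addrA.
Qed.

Lemma Gmul1g (a : T) : Gmul (Gone m n) a = a.
Proof.
case: a => k s; rewrite /Gmul /=; congr pair; last by rewrite mul1g.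
by apply/ffunP=> i; rewrite !ffunE /= perm1 add0r.
Qed.

Lemma Gmulg1 (a : T) : Gmul a (Gone m n) = a.
Proof.
case: a => k s; rewrite /Gmul /=; congr pair; last by rewrite mulg1.
by apply/ffunP=> i; rewrite !ffunE /= addr0.
Qed.

Lemma GmulVg (a : T) : Gmul (Ginv a) a = Gone m n.
Proof.
case: a => k s; rewrite /Gmul /Gone /=; congr pair; last by rewrite mulVg.
by apply/ffunP=> i; rewrite !ffunE /= addNr.
Qed.

Lemma GmulgV (a : T) : Gmul a (Ginv a) = Gone m n.
Proof.
case: a => k s; rewrite /Gmul /Gone /=; congr pair; last by rewrite mulgV.
by apply/ffunP=> i; rewrite !ffunE /= -permM mulgV perm1 subrr.
Qed.

Lemma GmulKg (a b : T) : Gmul (Ginv a) (Gmul a b) = b.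
Proof. by rewrite -GmulA GmulVg Gmul1g. Qed.
Lemma GmulKVg (a b : T) : Gmul a (Gmul (Ginv a) b) = b.
Proof. by rewrite -GmulA GmulgV Gmul1g. Qed.
Lemma GmulgK (a b : T) : Gmul (Gmul b a) (Ginv a) = b.
Proof. by rewrite GmulA GmulgV Gmulg1. Qed.
Lemma GmulgKV (a b : T) : Gmul (Gmul b (Ginv a)) a = b.
Proof. by rewrite GmulA GmulVg Gmulg1. Qed.
Lemma GinvK (a : T) : Ginv (Ginv a) = a.
Proof. by rewrite -[RHS](GmulKg (Ginv a)) GmulVg Gmulg1. Qed.
Lemma Gmul_injl (a : T) : injective (Gmul a).
Proof. by move=> x y /(congr1 (Gmul (Ginv a))); rewrite !GmulKg. Qed.
Lemma GinvM (a b : T) : Ginv (Gmul a b) = Gmul (Ginv b) (Ginv a).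
Proof.
apply: (@Gmul_injl (Gmul a b)); rewrite GmulgV GmulA -[Gmul b _]GmulA GmulgV Gmul1g.
by rewrite GmulgV.
Qed.
Lemma Gmul_injr (a : T) : injective (fun x : T => Gmul x a).
Proof. by move=> x y /(congr1 (fun z => Gmul z (Ginv a))) /=; rewrite !GmulgK. Qed.
Lemma Ginv_inj : injective Ginv.
Proof. by move=> x y /(congr1 Ginv); rewrite !GinvK. Qed.
End Grp.
Section Sub.
Variables (m n : nat).
Local Notation T := (Gmn m n).
Local Notation Z := ('I_m.-1.+1).

Definition inH (a : nat) (g : T) : bool :=
  [forall s : 'I_n, (a <= s)%N ==> (g.2 s == s) && (g.1 s == 0)].

Definition cont (g : T) (s : 'I_n) : 'I_n * Z := ((g.2)^-1%g s, g.1 ((g.2)^-1%g s)).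

Lemma inHP a (g : T) : reflect (forall s : 'I_n, (a <= s)%N -> g.2 s = s /\ g.1 s = 0) (inH a g).
Proof.
apply: (iffP forallP) => [H s les|H s]; first by have /implyP/(_ les)/andP[/eqP-> /eqP->] := H s.
by apply/implyP => /H [-> ->]; rewrite !eqxx.
Qed.

Lemma permV_fix (s : 'S_n) (x : 'I_n) : s x = x -> (s^-1)%g x = x.
Proof. by move=> h; rewrite -{1}h -permM mulgV perm1. Qed.

Lemma inH_cont a (g : T) (s : 'I_n) : inH a g -> (a <= s)%N -> cont g s = (s, 0).
Proof. by move=> /inHP H /H [h1 h2]; rewrite /cont permV_fix // h2. Qed.

Lemma cont_mul (u v : T) (s : 'I_n) :
  cont (Gmul u v) s = ((cont u (cont v s).1).1, (cont u (cont v s).1).2 + (cont v s).2).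
Proof.
by rewrite /cont /Gmul /= invMg permM ffunE permKV.
Qed.

Lemma inH_coset a (u v : T) :
  inH a (Gmul (Ginv u) v) = [forall s : 'I_n, (a <= s)%N ==> (cont u s == cont v s)].
Proof.
apply/inHP/forallP => [H s|H s les].
  apply/implyP => /H []; rewrite /Ginv /Gmul /cont /= permM ffunE => h1 h2.
  have e1 : (u.2)^-1%g s = (v.2)^-1%g s by rewrite -{2}h1 -permM mulgV perm1.
  rewrite -e1; move: h2; rewrite ffunE addrC => /eqP; rewrite subr_eq0 => /eqP ->.
  by rewrite eqxx.
have /implyP/(_ les)/eqP[e1 e2] := H s.
rewrite e1 in e2; rewrite /Ginv /Gmul /= permM !ffunE e1 permKV; split => //.
by rewrite e2 addNr.
Qed.

Lemma inH1 a : inH a (Gone m n).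
Proof. by apply/inHP => s _; rewrite /Gone /= perm1 ffunE. Qed.

Lemma inH_mul a (u v : T) : inH a u -> inH a v -> inH a (Gmul u v).
Proof.
move=> /inHP Hu /inHP Hv; apply/inHP => s les.
have [u1 u2] := Hu s les; have [v1 v2] := Hv s les.
by rewrite /Gmul /= permM ffunE u1 v1 u2 v2 addr0.
Qed.

Lemma inH_inv a (u : T) : inH a u -> inH a (Ginv u).
Proof.
move=> /inHP Hu; apply/inHP => s les.
have [u1 u2] := Hu s les.
by rewrite /Ginv /= ffunE !permV_fix // u2 oppr0.
Qed.

Lemma inH_le a b (u : T) : (a <= b)%N -> inH a u -> inH b u.
Proof. by move=> lab /inHP Hu; apply/inHP => s lbs; apply: Hu; apply: leq_trans lbs. Qed.

Lemma inH_n (u : T) : inH n u.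
Proof. by apply/inHP => s; rewrite leqNgt ltn_ord. Qed.

Lemma inH_0 (u : T) : inH 0 u -> u = Gone m n.
Proof.
case: u => k s /inHP H; rewrite /Gone; congr pair.
  by apply/ffunP => i; rewrite ffunE; case: (H i isT).
by apply/permP => i; rewrite perm1; case: (H i isT).
Qed.

Lemma inH_gen (i x : 'I_n) (k : Z) : (i <= x)%N -> inH x.+1 (gen i x k).
Proof.
move=> lix; apply/inHP => s lxs; rewrite /gen /= ffunE.
have nsi : s != i by apply/eqP => e; move: lxs; rewrite e ltnNge lix.
have nsx : s != x by apply/eqP => e; move: lxs; rewrite e ltnn.
split; first by rewrite tpermD // eq_sym.
by rewrite (negPf nsi) (negPf nsx).
Qed.

Lemma cont_gen (i x : 'I_n) (k : Z) (s : 'I_n) :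
  cont (gen i x k) s = (tperm i x s, if (s == i) || (s == x) then k else 0).
Proof.
rewrite /cont /gen /= tpermV ffunE; congr pair.
case: (tpermP i x s) => [->|->|/eqP ? /eqP ?]; rewrite ?eqxx ?orbT //.
Qed.

Lemma Ginv_gen (i x : 'I_n) (k : Z) : Ginv (gen i x k) = gen i x (- k).
Proof.
rewrite /Ginv /gen /= tpermV; congr pair; apply/ffunP => s; rewrite !ffunE.
by case: (tpermP i x s) => [->|->|/eqP ? /eqP ?]; rewrite ?eqxx ?orbT ?oppr0 //= 1?orbC; case: ifP => //; rewrite oppr0.
Qed.

Lemma permV_lt a (b : T) (i : 'I_n) : inH a b -> (i < a)%N -> ((b.2)^-1%g i < a)%N.
Proof.
move=> /inHP H lia; rewrite ltnNge; apply/negP => le.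
have [h1 _] := H _ le; move: lia; rewrite -(permKV b.2 i) h1 ltnNge le //.
Qed.

Lemma permV_ge a (b : T) (i : 'I_n) : inH a b -> (a <= i)%N -> (b.2)^-1%g i = i.
Proof. by move=> /inHP H /H [h _]; apply: permV_fix. Qed.

Lemma push a (b : T) (x i : 'I_n) (k : Z) : inH a b -> (a <= x)%N ->
  inH a (Gmul (Ginv (gen ((b.2)^-1%g i) x (k + b.1 ((b.2)^-1%g i)))) (Gmul b (gen i x k))).
Proof.
move=> Hb lax; rewrite inH_coset; apply/forallP => s; apply/implyP => las.
rewrite cont_mul !cont_gen.
have bx := inH_cont Hb lax.
apply/eqP.
have [sx|nsx] := eqVneq s x.
  by rewrite sx !orbT !tpermR /cont /= addrC.
have [si|nsi] := eqVneq s i.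
  have ii : (b.2)^-1%g i = i by apply: (permV_ge Hb); rewrite -si.
  have b1i : b.1 i = 0 by have /inHP/(_ i) := Hb; rewrite -si => /(_ las) [_ ->].
  have bxx : (b.2)^-1%g x = x := permV_ge Hb lax.
  have b1x : b.1 x = 0 by have /inHP/(_ x lax) [_ ->] := Hb.
  by rewrite si ii !eqxx /= !tpermL bxx b1x b1i addr0 add0r.
have b2s : b.2 s = s by have /inHP/(_ s las) [-> _] := Hb.
have nsi' : (b.2)^-1%g i != s.
  by apply: contra_neq nsi => e; rewrite -{1}b2s -e permKV.
rewrite !orbF.
rewrite ?(negPf nsi) (tpermD (x:=i) (y:=x)) 1?eq_sym //.
rewrite (inH_cont Hb las) /= addr0.
by rewrite (negPf nsi') tpermD // eq_sym.
Qed.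

End Sub.
Section Meas.
Variables (R : realType) (m n : nat).
Local Notation T := (Gmn m n).
Local Notation Z := ('I_m.-1.+1).
Local Notation conv := (@Defs.conv R m n).

Lemma sum_ifeq (y : T) (f : T -> R) : \sum_a (if y == a then f a else 0) = f y.
Proof. by rewrite (bigD1 y) //= eqxx big1 ?addr0 // => a /negPf; rewrite eq_sym => ->. Qed.

Lemma Ginv1 : Ginv (Gone m n) = Gone m n.
Proof. by rewrite -[LHS]Gmulg1 GmulVg. Qed.

Lemma convE (P Q : T -> R) g : conv P Q g = \sum_a P a * Q (Gmul (Ginv a) g).
Proof.
rewrite /Defs.conv; apply: eq_bigr => a _.
rewrite (bigD1 (Gmul (Ginv a) g)) //= GmulKVg eqxx big1 ?addr0 // => b nb.
case: eqP => // e; case/negP: nb; by rewrite -e GmulKg.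
Qed.

Lemma convEr (P Q : T -> R) g : conv P Q g = \sum_b P (Gmul g (Ginv b)) * Q b.
Proof.
rewrite /Defs.conv exchange_big; apply: eq_bigr => b _.
rewrite (bigD1 (Gmul g (Ginv b))) //= GmulgKV eqxx big1 ?addr0 // => a na.
case: eqP => // e; case/negP: na; by rewrite -e GmulgK.
Qed.

Lemma convA (P Q S : T -> R) : conv (conv P Q) S = conv P (conv Q S).
Proof.
apply: funext => g; rewrite convE.
under eq_bigr => x _ do rewrite convE mulr_suml.
rewrite exchange_big /= convE; apply: eq_bigr => a _.
rewrite convE mulr_sumr (reindex_inj (@Gmul_injl _ _ a)) /=.
by apply: eq_bigr => y _; rewrite GmulKg GinvM GmulA mulrA.
Qed.

Lemma sum_conv (P Q : T -> R) : \sum_g conv P Q g = (\sum_g P g) * (\sum_g Q g).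
Proof.
under eq_bigr => g _ do rewrite convE.
rewrite exchange_big mulr_suml; apply: eq_bigr => a _.
by rewrite -mulr_sumr (reindex_inj (@Gmul_injl _ _ a)); under eq_bigr do rewrite GmulKg.
Qed.

Lemma conv1l (P : T -> R) : conv (@delta1 R m n) P = P.
Proof.
apply: funext => g; rewrite convE (bigD1 (Gone m n)) //= /delta1 eqxx mul1r Ginv1 Gmul1g.
by rewrite big1 ?addr0 // => a /negPf ->; rewrite mul0r.
Qed.

Lemma conv1r (P : T -> R) : conv P (@delta1 R m n) = P.
Proof.
apply: funext => g; rewrite convEr (bigD1 (Gone m n)) //= /delta1 eqxx mulr1 Ginv1 Gmulg1.
by rewrite big1 ?addr0 // => a /negPf ->; rewrite mulr0.
Qed.

Lemma convDl (I : finType) (c : I -> R) (P : I -> T -> R) (S : T -> R) :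
  conv (fun g => \sum_i c i * P i g) S = fun g => \sum_i c i * conv (P i) S g.
Proof.
apply: funext => g; rewrite convE.
under eq_bigr do rewrite mulr_suml.
rewrite exchange_big; apply: eq_bigr => i _; rewrite convE mulr_sumr.
by apply: eq_bigr => a _; rewrite mulrA.
Qed.

Lemma convDr (I : finType) (c : I -> R) (P : I -> T -> R) (S : T -> R) :
  conv S (fun g => \sum_i c i * P i g) = fun g => \sum_i c i * conv S (P i) g.
Proof.
apply: funext => g; rewrite convE.
under eq_bigr do rewrite mulr_sumr.
rewrite exchange_big; apply: eq_bigr => i _; rewrite convE mulr_sumr.
by apply: eq_bigr => a _; rewrite mulrCA.
Qed.

Definition qc (x : 'I_n) : R := ((x.+1)%:R * m%:R)^-1.
Definition Qd (x : 'I_n) (g : T) : R :=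
  \sum_(i : 'I_n | (i <= x)%N) \sum_(k : Z) (if gen i x k == g then qc x else 0).

Lemma Qd_pair (x : 'I_n) (F : T -> R) :
  \sum_a Qd x a * F a = qc x * \sum_(p : 'I_n * Z | (p.1 <= x)%N) F (gen p.1 x p.2).
Proof.
under eq_bigr do rewrite /Qd mulr_suml; rewrite exchange_big /=.
under eq_bigr do (under eq_bigr do rewrite mulr_suml; rewrite exchange_big /=).
rewrite pair_big_dep /= mulr_sumr; apply: eq_big => [p|p _]; first by rewrite andbT.
rewrite (eq_bigr (fun a => if gen p.1 x p.2 == a then qc x * F a else 0)) ?sum_ifeq // => a _.
by case: ifP; rewrite ?mul0r // => /eqP <-.
Qed.

Lemma convQl (x : 'I_n) (F : T -> R) g :
  conv (Qd x) F g = qc x * \sum_(p : 'I_n * Z | (p.1 <= x)%N) F (Gmul (Ginv (gen p.1 x p.2)) g).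
Proof. by rewrite convE Qd_pair. Qed.

Lemma convQr (x : 'I_n) (F : T -> R) g :
  conv F (Qd x) g = qc x * \sum_(p : 'I_n * Z | (p.1 <= x)%N) F (Gmul g (Ginv (gen p.1 x p.2))).
Proof. by rewrite convEr; under eq_bigr do rewrite mulrC; rewrite Qd_pair. Qed.

End Meas.
Section Unif.
Variables (R : realType) (m n : nat).
Local Notation T := (Gmn m n).
Local Notation Z := ('I_m.-1.+1).
Local Notation conv := (@Defs.conv R m n).

Definition cH (a : nat) := #|[pred h : T | inH a h]|.
Definition Ua (a : nat) (g : T) : R := if inH a g then (cH a)%:R^-1 else 0.

Lemma cH_gt0 a : (0 < cH a)%N.
Proof. by apply/card_gt0P; exists (Gone m n); rewrite inE inH1. Qed.

Lemma sum_inH a (f : R) : \sum_(h : T) (if inH a h then (cH a)%:R^-1 * f else 0) = f.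
Proof.
rewrite -big_mkcond /= sumr_const -[X in _ *+ X]/(cH a) -mulrnAl -mulr_natr mulVf ?mul1r //.
by rewrite pnatr_eq0 -lt0n cH_gt0.
Qed.

Definition Linv a (F : T -> R) := forall b g, inH a b -> F (Gmul b g) = F g.
Definition Rinv a (F : T -> R) := forall b g, inH a b -> F (Gmul g b) = F g.

Lemma Linv_abs a F : Linv a F -> conv (Ua a) F = F.
Proof.
move=> HF; apply: funext => g; rewrite convE -[RHS](sum_inH a).
apply: eq_bigr => h _; rewrite /Ua; case: ifP => hH; last by rewrite mul0r.
by rewrite HF // inH_inv.
Qed.

Lemma Rinv_abs a F : Rinv a F -> conv F (Ua a) = F.
Proof.
move=> HF; apply: funext => g; rewrite convEr -[RHS](sum_inH a).
apply: eq_bigr => h _; rewrite /Ua; case: ifP => hH; last by rewrite mulr0.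
by rewrite HF ?inH_inv // mulrC.
Qed.

Lemma Ua_Linv a b : (a <= b)%N -> Linv a (Ua b).
Proof.
move=> lab h g hH; rewrite /Ua; congr (if _ then _ else _).
have hb := inH_le lab hH.
apply/idP/idP => [|gH]; last exact: inH_mul.
by move=> /(inH_mul (inH_inv hb)); rewrite GmulKg.
Qed.

Lemma Ua_Rinv a b : (a <= b)%N -> Rinv a (Ua b).
Proof.
move=> lab h g hH; rewrite /Ua; congr (if _ then _ else _).
have hb := inH_le lab hH.
apply/idP/idP => [|gH]; last exact: inH_mul.
by move=> /(fun H => inH_mul H (inH_inv hb)); rewrite GmulgK.
Qed.

End Unif.
Section Words.
Variables (R : realType) (m n : nat).
Local Notation T := (Gmn m n).
Local Notation Z := ('I_m.-1.+1).
Local Notation conv := (@Defs.conv R m n).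
Local Notation Qd := (@Qd R m n).
Local Notation Ua := (@Ua R m n).

Definition mu (w : seq 'I_n) : T -> R := foldr (fun x F => conv (Qd x) F) (@delta1 R m n) w.

Lemma mu_cat y z : mu (y ++ z) = conv (mu y) (mu z).
Proof.
elim: y => [|x y IH] /=; first by rewrite conv1l.
by rewrite IH convA.
Qed.

Lemma mu_rcons z x : mu (rcons z x) = conv (mu z) (Qd x).
Proof. by rewrite -cats1 mu_cat /= conv1r. Qed.

Definition phi (b : T) (p : 'I_n * Z) : 'I_n * Z :=
  ((b.2)^-1%g p.1, p.2 + b.1 ((b.2)^-1%g p.1)).

Lemma phi_inj b : injective (phi b).
Proof.
move=> [i1 k1] [i2 k2] e.
have e1 := congr1 fst e; have e2 := congr1 snd e; rewrite /phi /= in e1 e2.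
have ei : i1 = i2 by apply: (perm_inj e1).
rewrite ei in e2; move/addIr: e2 => ->.
by rewrite ei.
Qed.

Lemma phi_le a (b : T) (x : 'I_n) (i : 'I_n) : inH a b -> (a <= x)%N ->
  (((b.2)^-1%g i) <= x)%N = (i <= x)%N.
Proof.
move=> Hb lax; have [lia|lai] := ltnP i a.
  have := permV_lt Hb lia => h.
  by rewrite (leq_trans (ltnW h) lax) (leq_trans (ltnW lia) lax).
by rewrite (permV_ge Hb lai).
Qed.

Lemma sum_phi a (b : T) (x : 'I_n) (G : 'I_n * Z -> R) : inH a b -> (a <= x)%N ->
  \sum_(p : 'I_n * Z | (p.1 <= x)%N) G (phi b p) = \sum_(p : 'I_n * Z | (p.1 <= x)%N) G p.
Proof.
move=> Hb lax; rewrite [RHS](reindex_inj (@phi_inj b)) /=.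
by apply: eq_bigl => p; rewrite /phi /= (phi_le _ Hb lax).
Qed.

Lemma sum_neg (x : 'I_n) (G : 'I_n * Z -> R) :
  \sum_(p : 'I_n * Z | (p.1 <= x)%N) G (p.1, - p.2) = \sum_(p : 'I_n * Z | (p.1 <= x)%N) G p.
Proof.
have inj : injective (fun p : 'I_n * Z => (p.1, - p.2)).
  move=> [i1 k1] [i2 k2] e.
  have e1 := congr1 fst e; have e2 := congr1 snd e; simpl in e1, e2.
  by rewrite e1 (oppr_inj e2).
by rewrite [RHS](reindex_inj inj).
Qed.

Lemma push' a (b : T) (x : 'I_n) (p : 'I_n * Z) : inH a b -> (a <= x)%N ->
  exists2 h, inH a h & Gmul b (gen p.1 x p.2) = Gmul (gen (phi b p).1 x (phi b p).2) h.
Proof.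
move=> Hb lax; exists (Gmul (Ginv (gen (phi b p).1 x (phi b p).2)) (Gmul b (gen p.1 x p.2))).
  exact: push.
by rewrite GmulKVg.
Qed.

Lemma LI a z : Linv a (conv (mu z) (Ua a)).
Proof.
elim: z => [|x z IH] /=.
  by rewrite conv1l; apply: Ua_Linv.
rewrite convA => b g Hb; rewrite !convQl; congr (_ * _).
have [lxa|lax] := ltnP x a.
  apply: eq_bigr => p px.
  have Yin : inH a (gen p.1 x p.2) by apply: (inH_le lxa); apply: inH_gen.
  rewrite -[in RHS](IH (Gmul (Gmul (Ginv (gen p.1 x p.2)) b) (gen p.1 x p.2))).
    by rewrite !GmulA GmulKVg.
  by apply: inH_mul => //; apply: inH_mul => //; apply: inH_inv.
rewrite -[RHS](sum_phi (fun p => conv (mu z) (Ua a) (Gmul (Ginv (gen p.1 x p.2)) g)) (inH_inv Hb) lax).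
apply: eq_bigr => p px.
have [h hH e] := push' p (inH_inv Hb) lax.
have -> : Gmul (Ginv (gen p.1 x p.2)) (Gmul b g) =
          Gmul (Ginv h) (Gmul (Ginv (gen (phi (Ginv b) p).1 x (phi (Ginv b) p).2)) g).
  have E2 : Gmul (Ginv (gen p.1 x p.2)) b = Gmul (Ginv h) (Ginv (gen (phi (Ginv b) p).1 x (phi (Ginv b) p).2)).
    by rewrite -GinvM -e GinvM GinvK.
  by rewrite -GmulA E2 GmulA.
by rewrite IH // inH_inv.
Qed.

Lemma RI a z : Rinv a (conv (Ua a) (mu z)).
Proof.
elim/last_ind: z => [|z x IH] /=.
  by rewrite conv1r; apply: Ua_Rinv.
rewrite mu_rcons -convA => b g Hb; rewrite !convQr; congr (_ * _).
under eq_bigr do rewrite Ginv_gen.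
under [RHS]eq_bigr do rewrite Ginv_gen.
have [lxa|lax] := ltnP x a.
  apply: eq_bigr => p px.
  have Yin : inH a (gen p.1 x (- p.2)) by apply: (inH_le lxa); apply: inH_gen.
  have Yin' : inH a (Ginv (gen p.1 x (- p.2))) by apply: inH_inv.
  rewrite -[in RHS](IH (Gmul (Gmul (Ginv (gen p.1 x (- p.2))) b) (gen p.1 x (- p.2)))).
    by rewrite !GmulA GmulKVg.
  by apply: inH_mul => //; apply: inH_mul.
rewrite -(sum_neg _ (fun p => conv (Ua a) (mu z) (Gmul (Gmul g b) (gen p.1 x (- p.2))))).
rewrite -(sum_neg _ (fun p => conv (Ua a) (mu z) (Gmul g (gen p.1 x (- p.2))))) /=.
under eq_bigr do rewrite opprK.
under [RHS]eq_bigr do rewrite opprK.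
rewrite -[RHS](sum_phi (fun p => conv (Ua a) (mu z) (Gmul g (gen p.1 x p.2))) Hb lax) /=.
apply: eq_bigr => p px.
have [h hH e] := push' p Hb lax.
by rewrite GmulA e -GmulA IH.
Qed.

End Words.
Section Main.
Variables (R : realType) (m n : nat).
Hypothesis hm : (0 < m)%N.
Local Notation T := (Gmn m n).
Local Notation Z := ('I_m.-1.+1).
Local Notation conv := (@Defs.conv R m n).
Local Notation Qd := (@Qd R m n).
Local Notation Ua := (@Ua R m n).
Local Notation mu := (@mu R m n).
Local Notation qc := (@qc R m n).

Lemma sum_le_x (x : 'I_n) (c : R) : \sum_(i : 'I_n | (i <= x)%N) c = c *+ x.+1.
Proof.
rewrite (eq_bigl (fun i : 'I_n => true && (i < x.+1)%N)) => [|i]; last by rewrite ltnS.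
by rewrite -(@big_ord_widen_cond R 0 +%R x.+1 n (fun _ => true) (fun _ => c) (ltn_ord x)) sumr_const card_ord.
Qed.

Lemma mm : m.-1.+1 = m.
Proof. by rewrite prednK. Qed.

Lemma qc_ne0 (x : 'I_n) : ((x.+1)%:R * m%:R : R) != 0.
Proof. by rewrite mulf_neq0 // pnatr_eq0 // -lt0n. Qed.

Lemma sum_pairs (x : 'I_n) : \sum_(p : 'I_n * Z | (p.1 <= x)%N) (1 : R) = (x.+1)%:R * m%:R.
Proof.
rewrite (_ : \sum_(p : 'I_n * Z | (p.1 <= x)%N) (1:R) = \sum_(i : 'I_n | (i <= x)%N) \sum_(k : Z) (1:R)); last first.
  by rewrite pair_big_dep; apply: eq_bigl => p; rewrite andbT.
rewrite (eq_bigr (fun _ => (m%:R : R))) => [|i _]; last by rewrite sumr_const card_ord mm.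
by rewrite sum_le_x mulr_natl.
Qed.

Lemma sum_Qd (x : 'I_n) : \sum_g Qd x g = 1.
Proof.
under eq_bigr do rewrite -[Qd x _]mulr1.
by rewrite Qd_pair sum_pairs mulVf // qc_ne0.
Qed.

Lemma Qd_ge0 (x : 'I_n) g : 0 <= Qd x g.
Proof.
apply: sumr_ge0 => i _; apply: sumr_ge0 => k _; case: ifP => // _.
by rewrite /qc invr_ge0 mulr_ge0 // ler0n.
Qed.

Lemma sum_Ua a : \sum_g Ua a g = 1.
Proof.
rewrite -[RHS](@sum_inH R m n a 1).
by apply: eq_bigr => g _; rewrite /Ua mulr1.
Qed.

Lemma conv_ge0 (P Q : T -> R) g : (forall x, 0 <= P x) -> (forall x, 0 <= Q x) -> 0 <= conv P Q g.
Proof. by move=> hP hQ; rewrite convE; apply: sumr_ge0 => a _; apply: mulr_ge0. Qed.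

Lemma mu_ge0 w g : 0 <= mu w g.
Proof.
elim: w g => [|x w IH] g /=; first by rewrite /delta1; case: ifP.
by apply: conv_ge0 => // y; apply: Qd_ge0.
Qed.

Lemma sum_mu w : \sum_g mu w g = 1.
Proof.
elim: w => [|x w IH] /=.
  by rewrite (bigD1 (Gone m n)) //= /delta1 eqxx big1 ?addr0 // => g /negPf ->.
by rewrite sum_conv IH sum_Qd mulr1.
Qed.

Lemma count_coset (x : 'I_n) (g : T) :
  \sum_(p : 'I_n * Z | (p.1 <= x)%N) Ua x (Gmul (Ginv (gen p.1 x p.2)) g) =
  if inH x.+1 g then (cH m n x)%:R^-1 else 0.
Proof.
case: ifP => Hg.
  have p0le : (((g.2)^-1%g x) <= x)%N.
    by rewrite -ltnS; apply: (permV_lt Hg); rewrite ltnS.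
  rewrite (bigD1 (cont g x)) /=; last by move: p0le; rewrite /cont. 
  rewrite big1 ?addr0.
    rewrite /Ua; case: ifP => // /negP []; rewrite inH_coset.
    apply/forallP => s; apply/implyP => lxs; rewrite cont_gen.
    have [sx|nsx] := eqVneq s x.
      by rewrite sx orbT tpermR /cont eqxx.
    have lts : (x < s)%N by rewrite ltn_neqAle lxs eq_sym nsx.
    rewrite (inH_cont Hg lts).
    have nsi : s != ((g.2)^-1%g x).
      by apply/eqP => e; move: p0le; rewrite -e leqNgt lts.
    by rewrite orbF (negPf nsi) tpermD 1?eq_sym.
  move=> [i k] /andP [/= lix ne]; rewrite /Ua; case: ifP => // H.
  move: H; rewrite inH_coset => /forallP /(_ x) /implyP /(_ (leqnn _)) /eqP.
  rewrite cont_gen tpermR eqxx orbT => e.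
  by move: ne; rewrite -e eqxx.
rewrite big1 // => [[i k]] /= lix; rewrite /Ua; case: ifP => // H.
have H1 : inH x.+1 (Gmul (gen i x k) (Gmul (Ginv (gen i x k)) g)).
  apply: inH_mul; first exact: inH_gen.
  exact: inH_le (leqnSn _) H.
by move: H1; rewrite GmulKVg Hg.
Qed.

Lemma QU (x : 'I_n) : conv (Qd x) (Ua x) = Ua x.+1.
Proof.
set K := qc x * (cH m n x)%:R^-1.
have E : forall g, conv (Qd x) (Ua x) g = if inH x.+1 g then K else 0.
  by move=> g; rewrite convQl count_coset; case: ifP; rewrite ?mulr0.
have e1 : \sum_(g : T) (if inH x.+1 g then K else 0) = 1.
  transitivity (\sum_g conv (Qd x) (Ua x) g); first by apply: eq_bigr => g _; rewrite E.
  by rewrite sum_conv sum_Qd sum_Ua mulr1.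
rewrite -big_mkcond /= sumr_const -[X in _ *+ X]/(cH m n x.+1) -mulr_natr in e1.
have nN0 : (cH m n x.+1)%:R != 0 :> R by rewrite pnatr_eq0 -lt0n cH_gt0.
apply: funext => g; rewrite E /Ua; case: ifP => // _.
by apply: (mulIf nN0); rewrite e1 mulVf.
Qed.

End Main.
Section Chain.
Variables (R : realType) (m n : nat).
Hypothesis hm : (0 < m)%N.
Local Notation T := (Gmn m n).
Local Notation conv := (@Defs.conv R m n).
Local Notation Qd := (@Qd R m n).
Local Notation Ua := (@Ua R m n).
Local Notation mu := (@mu R m n).

Lemma chain (x : 'I_n) z : conv (Qd x) (conv (mu z) (Ua x)) = conv (mu z) (Ua x.+1).
Proof.
have U1U : conv (Ua x.+1) (Ua x) = Ua x.+1 by apply: Rinv_abs; apply: Ua_Rinv.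
rewrite -(Linv_abs (@LI R m n x z)) -convA (@QU R m n hm x) -convA.
rewrite -{1}U1U (convA (Ua x.+1) (Ua x) (mu z)) convA (Rinv_abs (@RI R m n x z)).
rewrite -convA U1U.
by rewrite -(Rinv_abs (@RI R m n x.+1 z)) convA (Linv_abs (@LI R m n x.+1 z)).
Qed.

Lemma conv_Un (P : T -> R) : \sum_g P g = 1 -> conv P (Ua n) = Ua n.
Proof.
move=> hP; apply: funext => g; rewrite convE /Ua inH_n.
by under eq_bigr do rewrite inH_n; rewrite -mulr_suml hP mul1r.
Qed.

Lemma main_cov (w : seq 'I_n) (a : nat) : (a <= n)%N ->
  (forall s : 'I_n, (a <= s)%N -> s \in w) -> conv (mu w) (Ua a) = Ua n.
Proof.
move=> lan; move Hd: (n - a)%N => d; elim: d a w lan Hd => [|d IH] a w lan Hd Hw.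
  have -> : a = n by apply/eqP; rewrite eqn_leq lan -subn_eq0 Hd.
  by apply: conv_Un; apply: (@sum_mu R m n hm).
have lt_an : (a < n)%N by rewrite -subn_gt0 Hd.
pose s := Ordinal lt_an.
have Hs := Hw s (leqnn _); move: Hw; case/splitPr: Hs => y z Hw.
have -> : mu (y ++ s :: z) = conv (mu y) (conv (Qd s) (mu z)) by rewrite (@mu_cat R m n).
rewrite !convA (chain s z) -convA -(@mu_cat R m n).
apply: IH => //; first by rewrite subnS Hd.
move=> t lat; have /Hw : (a <= t)%N by apply: ltnW.
rewrite !mem_cat in_cons => /or3P [->|/eqP e|->]; rewrite ?orbT //.
by move: lat; rewrite e ltnn.
Qed.

Lemma Ua0 : Ua 0 = @delta1 R m n.
Proof.
apply: funext => g; rewrite /Ua /delta1.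
have c1 : cH m n 0 = 1%N.
  rewrite /cH -(card1 (Gone m n)); apply: eq_card => h; rewrite !inE.
  by apply/idP/eqP => [/inH_0|->] //; apply: inH1.
case: ifP => [/inH_0 ->|H]; first by rewrite eqxx c1 invr1.
by case: eqP => // e; move: H; rewrite e inH1.
Qed.

Lemma mu_cover (w : seq 'I_n) : (forall s : 'I_n, s \in w) -> mu w = Ua n.
Proof.
move=> Hw; rewrite -[mu w]conv1r -Ua0; apply: main_cov => // s _; exact: Hw.
Qed.

Lemma Ua_n g : Ua n g = @Unif R m n g.
Proof.
rewrite /Ua /Unif inH_n; congr (_%:R^-1).
by rewrite /cH; apply: eq_card => h; rewrite !inE inH_n.
Qed.

End Chain.
Section Prob.
Variables (R : realType) (m n : nat).
Hypothesis hm : (0 < m)%N.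
Local Notation T := (Gmn m n).
Local Notation conv := (@Defs.conv R m n).
Local Notation mu := (@mu R m n).

Lemma convDl_seq (I : Type) (r : seq I) (c : I -> R) (P : I -> T -> R) (S : T -> R) :
  conv (fun g => \sum_(i <- r) c i * P i g) S = fun g => \sum_(i <- r) c i * conv (P i) S g.
Proof.
apply: funext => g; rewrite convE.
under eq_bigr do rewrite mulr_suml.
rewrite exchange_big; apply: eq_bigr => i _; rewrite convE mulr_sumr.
by apply: eq_bigr => a _; rewrite mulrA.
Qed.

Lemma convDr_seq (I : Type) (r : seq I) (c : I -> R) (P : I -> T -> R) (S : T -> R) :
  conv S (fun g => \sum_(i <- r) c i * P i g) = fun g => \sum_(i <- r) c i * conv S (P i) g.
Proof.
apply: funext => g; rewrite convE.
under eq_bigr do rewrite mulr_sumr.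
rewrite exchange_big; apply: eq_bigr => i _; rewrite convE mulr_sumr.
by apply: eq_bigr => a _; rewrite mulrCA.
Qed.

Lemma OST_Qd : @OST R m n = fun g => \sum_(j <- index_enum 'I_n) n%:R^-1 * @Qd R m n j g.
Proof.
apply: funext => g; rewrite /OST; apply: eq_bigr => j _.
rewrite /Qd mulr_sumr; apply: eq_bigr => i _; rewrite mulr_sumr; apply: eq_bigr => k _.
by rewrite /qc; case: ifP; rewrite ?mulr0 // -mulrA invfM.
Qed.

Fixpoint words (t : nat) : seq (seq 'I_n) :=
  if t is t'.+1 then flatten [seq [seq rcons w j | j <- index_enum 'I_n] | w <- words t']
  else [:: [::]].

Lemma sum_words t (F : seq 'I_n -> R) :
  \sum_(w <- words t.+1) F w = \sum_(w <- words t) \sum_(j <- index_enum 'I_n) F (rcons w j).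
Proof. by rewrite /= big_flatten big_map; apply: eq_bigr => w _; rewrite big_map. Qed.

Lemma convpow_words t :
  convpow (@OST R m n) t = fun g => \sum_(w <- words t) (n%:R^-1) ^+ t * mu w g.
Proof.
elim: t => [|t IH].
  by apply: funext => g; rewrite /= big_seq1 expr0 mul1r.
rewrite /convpow iterS -/(convpow _ t) IH OST_Qd convDl_seq; apply: funext => g.
rewrite sum_words; apply: eq_bigr => w _.
rewrite convDr_seq mulr_sumr; apply: eq_bigr => j _.
by rewrite mu_rcons exprS mulrA [_ * n%:R^-1]mulrC.
Qed.

Lemma sum1_ord : \sum_(j <- index_enum 'I_n) (1:R) = n%:R.
Proof. by rewrite big_const_ord iter_addr_0. Qed.

Lemma words_total t : \sum_(w <- words t) (1 : R) = n%:R ^+ t.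
Proof.
elim: t => [|t IH]; first by rewrite big_seq1 expr0.
rewrite sum_words exprS -IH mulr_sumr; apply: eq_bigr => w _.
by rewrite sum1_ord mulr1.
Qed.

End Prob.
Section Bound.
Variables (R : realType) (m n : nat).
Hypothesis hm : (0 < m)%N.
Hypothesis hn : (0 < n)%N.
Local Notation T := (Gmn m n).
Local Notation mu := (@mu R m n).
Local Notation words := (@words n).

Lemma sum_eqs (s : 'I_n) : \sum_(j <- index_enum 'I_n) (if s == j then 1 else 0 : R) = 1.
Proof. by rewrite (bigD1 s) //= eqxx big1 ?addr0 // => j /negPf; rewrite eq_sym => ->. Qed.

Lemma words_avoid t (s : 'I_n) :
  \sum_(w <- words t) (if s \in w then 0 else 1 : R) = (n%:R - 1) ^+ t.
Proof.
elim: t => [|t IH]; first by rewrite big_seq1 expr0 in_nil.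
rewrite sum_words exprS -IH mulr_sumr; apply: eq_bigr => w _.
rewrite (eq_bigr (fun j => (if s \in w then 0 else 1) * (1 - if s == j then 1 else 0))); last first.
  by move=> j _; rewrite mem_rcons in_cons; case: (s == j); case: (s \in w); rewrite ?subrr ?subr0 ?mulr0 ?mul0r ?mulr1.
by rewrite -mulr_sumr sumrB sum1_ord sum_eqs mulrC.
Qed.

Definition cov (w : seq 'I_n) := [forall s : 'I_n, s \in w].

Lemma cov_ge (w : seq 'I_n) :
  1 - \sum_(s <- index_enum 'I_n) (if s \in w then 0 else 1 : R) <= (if cov w then 1 else 0).
Proof.
case: ifP => [/forallP H|/negbT /forallPn [s hs]].
  by rewrite big1 ?subr0 // => s _; rewrite H.
rewrite subr_le0 (bigD1 s) //= (negPf hs) lerDl.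
by apply: sumr_ge0 => j _; case: ifP.
Qed.

Lemma count_cov t :
  n%:R ^+ t - n%:R * (n%:R - 1) ^+ t <= \sum_(w <- words t) (if cov w then 1 else 0 : R).
Proof.
rewrite -(words_total R n t).
have -> : n%:R * (n%:R - 1) ^+ t = \sum_(s <- index_enum 'I_n) \sum_(w <- words t) (if s \in w then 0 else 1 : R).
  by under eq_bigr do rewrite words_avoid; rewrite sumr_const card_ord mulr_natl.
rewrite exchange_big -sumrB; apply: ler_sum => w _; exact: cov_ge.
Qed.

Lemma pow_lower t g :
  1 - n%:R * (1 - n%:R^-1) ^+ t <= convpow (@OST R m n) t g / @Unif R m n g.
Proof.
have n0 : (n%:R : R) != 0 by rewrite pnatr_eq0 -lt0n.
have U0 : @Unif R m n g != 0.
  by rewrite /Unif invr_eq0 pnatr_eq0 -lt0n; apply/card_gt0P; exists g.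
have Upos : 0 < @Unif R m n g.
  by rewrite /Unif invr_gt0 ltr0n; apply/card_gt0P; exists g.
rewrite ler_pdivlMr // (convpow_words R m n t) /=.
apply: (@le_trans _ _ (\sum_(w <- words t) (n%:R^-1) ^+ t * (if cov w then 1 else 0) * @Unif R m n g)).
  rewrite -mulr_suml -mulr_sumr ler_pM2r //.
  apply: (@le_trans _ _ ((n%:R^-1) ^+ t * (n%:R ^+ t - n%:R * (n%:R - 1) ^+ t))); last first.
    by rewrite ler_pM2l ?exprn_gt0 ?invr_gt0 ?ltr0n // count_cov.
  rewrite mulrBr -exprMn mulVf // expr1n mulrCA -exprMn mulrBr mulr1 mulVf //.
apply: ler_sum => w _; case: ifP => [cw|_].
  by rewrite mulr1 (mu_cover R hm) ?Ua_n //; move/forallP: cw.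
by rewrite mulr0 mul0r mulr_ge0 ?exprn_ge0 ?invr_ge0 ?ler0n ?mu_ge0.
Qed.

Lemma sep_bound t : sep (convpow (@OST R m n) t) <= n%:R * (1 - n%:R^-1) ^+ t.
Proof.
rewrite /sep lerBlDr -lerBlDl; apply: le_bigmin => [|g _]; exact: pow_lower.
Qed.

End Bound.
From mathcomp Require Import ring lra.

Section Tail.
Variables (R : realType) (m : nat).
Hypothesis hm : (0 < m)%N.

Lemma tail_bound (c : R) (n : nat) : (2 <= n)%N ->
  sep (convpow (@OST R m n) (Num.truncn (n%:R * ln (n%:R : R) + c * n%:R)))
    <= expR (- c) / (1 - n%:R^-1).
Proof.
move=> n2.
set X := n%:R * ln (n%:R : R) + c * n%:R.
set t := Num.truncn X.
have hn : (0 < n)%N by apply: leq_trans n2.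
have npos : (0 : R) < n%:R by rewrite ltr0n.
have n2r : (2 : R) <= n%:R by rewrite (ler_nat R 2 n).
set q := 1 - n%:R^-1.
have qpos : 0 < q.
  rewrite /q subr_gt0 invf_lt1 //; lra.
apply: le_trans (sep_bound R hm hn t) _.
have Xlt : X < (t.+1)%:R by apply: truncnS_gt.
have qle : q <= expR (- n%:R^-1) by rewrite /q; apply: expR_ge1Dx.
have h1 : q ^+ t.+1 <= expR (- n%:R^-1) ^+ t.+1.
  by apply: lerXn2r => //; rewrite ?nnegrE ?expR_ge0 ?ltW.
have h2 : expR (- n%:R^-1) ^+ t.+1 <= expR (- c) * n%:R^-1.
  have -> : expR (- c) * n%:R^-1 = expR (- c - ln (n%:R : R)).
    by rewrite expRD [expR (- ln _)]expRN lnK // posrE.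
  rewrite -expRM_natl ler_expR.
  have H : X * n%:R^-1 <= (t.+1)%:R * n%:R^-1.
    by rewrite ler_pM2r ?invr_gt0 // ltW.
  have HX : X * n%:R^-1 = ln (n%:R : R) + c.
    by rewrite /X; field; rewrite gt_eqF.
  rewrite HX in H; rewrite mulrN; lra.
have H : q * q ^+ t <= expR (- c) * n%:R^-1 by rewrite -exprS; apply: le_trans h1 h2.
have H3 : n%:R * (q * q ^+ t) <= n%:R * (expR (- c) * n%:R^-1) by rewrite ler_pM2l.
rewrite [n%:R * (expR _ * _)]mulrCA mulfV ?mulr1 in H3; last by rewrite gt_eqF.
by rewrite ler_pdivlMr // -mulrA [q ^+ t * q]mulrC.
Qed.

End Tail.
Unset Implicit Arguments.
Theorem proposition4p8 (R : realType) (m : nat) (hm : (1 <= m)%N)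
  (c : R) (hc : 0 < c) :
  (limn_esup (fun n : nat =>
     (sep (convpow (@OST R m n)
        (Num.truncn (n%:R * ln (n%:R : R) + c * n%:R))))%:E)
   <= (expR (- c))%:E)%E.
Proof.
apply/lee_addgt0Pr => e e0.
set E := expR (- c).
have E0 : 0 < E by apply: expR_gt0.
rewrite limn_esup_lim; apply: lime_le; first exact: is_cvg_esups.
exists (Num.truncn (E / e)).+2 => // k /= Nk.
apply: ge_ereal_sup => _ [j /= kj <-].
have Nj : ((Num.truncn (E / e)).+2 <= j)%N by apply: leq_trans Nk kj.
have j2 : (2 <= j)%N by apply: leq_trans Nj.
rewrite -EFinD lee_fin.
apply: le_trans (tail_bound hm c j2) _.
have jpos : (0 : R) < j%:R by rewrite ltr0n; apply: leq_trans j2.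
have j2r : (2 : R) <= j%:R by rewrite (ler_nat R 2 j).
have qpos : (0 : R) < 1 - j%:R^-1 by rewrite subr_gt0 invf_lt1 //; lra.
have H1 : E / e < (Num.truncn (E / e)).+1%:R by apply: truncnS_gt.
have H2 : ((Num.truncn (E / e)).+1%:R : R) <= j%:R - 1.
  by rewrite lerBrDr natr1 ler_nat.
have H3 : E < (j%:R - 1) * e by rewrite -ltr_pdivrMr //; apply: lt_le_trans H1 H2.
rewrite ler_pdivrMr // mulrBr mulr1.
have H4 : (E + e) * (j%:R : R)^-1 <= e.
  by rewrite ler_pdivrMr //; lra.
rewrite -/E; lra.
Qed.
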